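(* For the iterates of the ROSS algorithm described in the context, with momentum coefficient $\alpha\in[0,1)$, define $\bar S^{[0]}=\bar x^{[0]}$ and $\bar S^{[t]}=\frac{1}{1-\alpha}\bar x^{[t]}-\frac{\alpha}{1-\alpha}\bar x^{[t-1]}$ for $t\ge1$. Then for every $T\ge1$, $$\sum_{t=1}^T\left\|\bar S^{[t]}-\bar x^{[t]}\right\|^2\le\frac{\gamma^2\alpha^2}{(1-\alpha)^4}\sum_{t=1}^T\left\|\frac1N\sum_{i=1}^N\bar g^{[t]}_i\right\|^2.$$
   Context: Setting: $N\ge1$ agents $\mathcal{N}=\{1,\dots,N\}$. $\mathbf{W}=(\omega_{i,j})\in[0,1]^{N\times N}$ is a symmetric doubly stochastic matrix ($\omega_{i,j}=\omega_{j,i}$, $\sum_{j}\omega_{i,j}=1$). $\mathcal{N}_i=\{j\in\mathcal{N}:\omega_{i,j}>0\}$ is the neighborhood of agent $i$ (the algorithm treats $i$ itself as a member of $\mathcal{N}_i$). Agent $i$ has a data distribution $\mathcal{D}_i$; $F(x;\xi)$ is a real-valued loss, differentiable in $x\in\mathbb{R}^d$. A finite validation set $\mathcal{Q}$ is available to every agent, and $J(\xi;x)$ denotes the accuracy of model $x$ on sample $\xi$. Algorithm ROSS (learning rate $\gamma>0$, momentum coefficient $\alpha$): all agents start from a common point $x_i^{[0]}=x^{[0]}$ with $u_i^{[0]}=0$. In each round $t=1,2,\dots$, each agent $i$ draws a sample $\xi_{i,t}\sim\mathcal{D}_i$ and for each $j\in\mathcal{N}_i$ computes $g^{[t]}_{i,j}=\nabla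 F(x^{[t-1]}_j;\xi_{i,t})$. Agent $i$ then sets $x^{[t]}_{i,j}=x^{[t-1]}_i-\gamma g^{[t]}_{j,i}$ for $j\in\mathcal{N}_i$; for $\mathcal{N}'\subseteq\mathcal{N}_i$ it defines $v(\mathcal{N}')=\frac{1}{|\mathcal{Q}|}\sum_{\xi\in\mathcal{Q}}J\big(\xi;\frac{1}{|\mathcal{N}'|}\sum_{j\in\mathcal{N}'}x^{[t]}_{i,j}\big)$ ($v(\emptyset)=0$); Shapley values $\varphi^{[t]}_{i,j}=\sum_{\mathcal{N}'\subseteq\mathcal{N}_i\setminus\{j\}}\frac{v(\mathcal{N}'\cup\{j\})-v(\mathcal{N}')}{|\mathcal{N}_i|\binom{|\mathcal{N}_i|-1}{|\mathcal{N}'|}}$; normalized values $\hat\varphi^{[t]}_{i,j}=\frac{\varphi^{[t]}_{i,j}-\min_{k\in\mathcal{N}_i}\varphi^{[t]}_{i,k}}{\max_{k\in\mathcal{N}_i}\varphi^{[t]}_{i,k}-\min_{k\in\mathcal{N}_i}\varphi^{[t]}_{i,k}}$; weights $\pi^{[t]}_{i,j}=\frac{\hat\varphi^{[t]}_{i,j}}{\omega_{i,j}\sum_{k\in\mathcal{N}_i}\hat\varphi^{[t]}_{i,k}}$; then $\bar g^{[t]}_i=\sum_{j\in\mathcal{N}_i}\pi^{[t]}_{i,j}g^{[t]}_{j,i}$, $\hat u^{[t]}_i=\alpha u^{[t-1]}_i+\bar g^{[t]}_i$, $\hat x^{[t]}_i=x^{[t-1]}_i-\gamma\hat u^{[t]}_i$,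 $u^{[t]}_i=\sum_{j\in\mathcal{N}_i}\omega_{i,j}\hat u^{[t]}_j$, $x^{[t]}_i=\sum_{j\in\mathcal{N}_i}\omega_{i,j}\hat x^{[t]}_j$. Write $\bar x^{[t]}=\frac1N\sum_{i=1}^N x^{[t]}_i$. *)

(* Defs.v *)
From HB Require Import structures.
From mathcomp Require Import all_boot all_order all_algebra.
From mathcomp Require Import all_classical all_reals all_analysis.
Set Implicit Arguments. Unset Strict Implicit. Unset Printing Implicit Defensive.
Import Order.TTheory GRing.Theory Num.Theory.
Import numFieldNormedType.Exports.
Local Open Scope ring_scope.

Section ROSS.
Variables (R : realType) (d N : nat) (Xi : Type).
Variable F : 'rV[R]_d -> Xi -> R.
Variable J : Xi -> 'rV[R]_d -> R.
Variable Q : seq Xi.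
Variable W : 'M[R]_N.
Variables (gamma alpha : R).
Variable x0 : 'rV[R]_d.
(* sample realisation: xi i t = xi_{i,t} drawn by agent i in round t *)
Variable xi : 'I_N -> nat -> Xi.

Definition sqnorm (v : 'rV[R]_d) : R := \sum_(k < d) (v 0 k) ^+ 2.

Definition gradF (x : 'rV[R]_d) (s : Xi) : 'rV[R]_d :=
  \row_(k < d) ('D_(delta_mx 0 k) (fun y => F y s) x).

Definition nbhd (i : 'I_N) : {set 'I_N} := [set j | (0 < W i j) || (j == i)].

Definition gmsg (xprev : 'I_N -> 'rV[R]_d) (t : nat) (j i : 'I_N) : 'rV[R]_d :=
  gradF (xprev i) (xi j t).

Definition xij (xprev : 'I_N -> 'rV[R]_d) (t : nat) (i j : 'I_N) : 'rV[R]_d :=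
  xprev i - gamma *: gmsg xprev t j i.

Definition coal_val (xprev : 'I_N -> 'rV[R]_d) (t : nat) (i : 'I_N)
  (S : {set 'I_N}) : R :=
  if S == finset.set0 then 0 else
  (size Q)%:R^-1 * \sum_(s <- Q)
     J s ((#|S|)%:R^-1 *: \sum_(j in S) xij xprev t i j).

Definition shapley (xprev : 'I_N -> 'rV[R]_d) (t : nat) (i j : 'I_N) : R :=
  \sum_(S in powerset (nbhd i :\ j)%SET)
    (coal_val xprev t i (S :|: [set j]) - coal_val xprev t i S) /
    ((#|nbhd i|)%:R * ('C(#|nbhd i|.-1, #|S|))%:R).

Definition shapley_min (xprev : 'I_N -> 'rV[R]_d) (t : nat) (i : 'I_N) : R :=
  \big[Num.min/shapley xprev t i i]_(k in nbhd i) shapley xprev t i k.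
Definition shapley_max (xprev : 'I_N -> 'rV[R]_d) (t : nat) (i : 'I_N) : R :=
  \big[Num.max/shapley xprev t i i]_(k in nbhd i) shapley xprev t i k.

Definition nshapley (xprev : 'I_N -> 'rV[R]_d) (t : nat) (i j : 'I_N) : R :=
  (shapley xprev t i j - shapley_min xprev t i) /
  (shapley_max xprev t i - shapley_min xprev t i).

Definition piw (xprev : 'I_N -> 'rV[R]_d) (t : nat) (i j : 'I_N) : R :=
  nshapley xprev t i j /
  (W i j * \sum_(k in nbhd i) nshapley xprev t i k).

Definition gbar_of (xprev : 'I_N -> 'rV[R]_d) (t : nat) (i : 'I_N) : 'rV[R]_d :=
  \sum_(j in nbhd i) piw xprev t i j *: gmsg xprev t j i.

(* one round t of ROSS: from (x^[t-1], u^[t-1]) to (x^[t], u^[t]) *)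
Definition ross_step (t : nat) (st : ('I_N -> 'rV[R]_d) * ('I_N -> 'rV[R]_d))
  : ('I_N -> 'rV[R]_d) * ('I_N -> 'rV[R]_d) :=
  let xprev := st.1 in let uprev := st.2 in
  let uhat := fun i => alpha *: uprev i + gbar_of xprev t i in
  let xhat := fun i => xprev i - gamma *: uhat i in
  (fun i => \sum_(j in nbhd i) W i j *: xhat j,
   fun i => \sum_(j in nbhd i) W i j *: uhat j).

Fixpoint ross (t : nat) : ('I_N -> 'rV[R]_d) * ('I_N -> 'rV[R]_d) :=
  match t with
  | 0 => (fun _ => x0, fun _ => 0)
  | t'.+1 => ross_step t'.+1 (ross t')
  end.

Definition ross_x (t : nat) (i : 'I_N) : 'rV[R]_d := (ross t).1 i.

(* bar g^[t]_i, for t >= 1 (computed from x^[t-1]) *)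
Definition ross_gbar (t : nat) (i : 'I_N) : 'rV[R]_d :=
  gbar_of (ross t.-1).1 t i.

Definition xbar (t : nat) : 'rV[R]_d := (N%:R)^-1 *: \sum_(i < N) ross_x t i.

Definition Sbar (t : nat) : 'rV[R]_d :=
  if t is t'.+1 then
    (1 - alpha)^-1 *: xbar t - (alpha / (1 - alpha)) *: xbar t'
  else xbar 0.

End ROSS.

(* Main.v *)
Require Import Defs.
From HB Require Import structures.
From mathcomp Require Import all_boot all_order all_algebra.
From mathcomp Require Import all_classical all_reals all_analysis.
From mathcomp Require Import lra ring.
Import Order.TTheory GRing.Theory Num.Theory.
Import numFieldNormedType.Exports.
Local Open Scope ring_scope.

Lemma scal_step (R : realType) (a x y : R) :
  0 <= a < 1 -> (a * x + y) ^+ 2 <= a * x ^+ 2 + y ^+ 2 / (1 - a).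
Proof.
move=> /andP[a0 a1].
have hb : 1 - a != 0 by rewrite subr_eq0; apply/eqP => h; lra.
have E : a * x ^+ 2 + y ^+ 2 / (1 - a) - (a * x + y) ^+ 2
   = a / (1 - a) * ((1 - a) * x - y) ^+ 2 by field.
rewrite -subr_ge0 E mulr_ge0 // ?sqr_ge0 // divr_ge0 //; lra.
Qed.

Lemma sqnormZ (R : realType) (d : nat) (c : R) (v : 'rV[R]_d) :
  sqnorm (c *: v) = c ^+ 2 * sqnorm v.
Proof.
rewrite /sqnorm mulr_sumr; apply: eq_bigr => k _; rewrite !mxE; by rewrite exprMn.
Qed.

Lemma sqnorm_ge0 (R : realType) (d : nat) (v : 'rV[R]_d) : 0 <= sqnorm v.
Proof. by rewrite /sqnorm sumr_ge0 // => k _; rewrite sqr_ge0. Qed.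

Lemma sqnorm0 (R : realType) (d : nat) : sqnorm (0 : 'rV[R]_d) = 0.
Proof. by rewrite /sqnorm big1 // => k _; rewrite mxE expr0n. Qed.

Lemma sqnorm_step (R : realType) (d : nat) (a : R) (u g : 'rV[R]_d) :
  0 <= a < 1 ->
  sqnorm (a *: u + g) <= a * sqnorm u + sqnorm g / (1 - a).
Proof.
move=> ha.
rewrite /sqnorm mulr_sumr mulr_suml -big_split /=; apply: ler_sum => k _.
by rewrite !mxE scal_step.
Qed.

Lemma sumW (R : realType) (d N : nat) (W : 'M[R]_N) (f : 'I_N -> 'rV[R]_d) :
  (forall i j, 0 <= W i j <= 1) ->
  (forall i j, W i j = W j i) ->
  (forall i, \sum_(j < N) W i j = 1) ->
  \sum_(i < N) \sum_(j in nbhd W i) W i j *: f j = \sum_(j < N) f j.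
Proof.
move=> W01 Wsym W1.
have E : forall i, \sum_(j in nbhd W i) W i j *: f j = \sum_(j < N) W i j *: f j.
  move=> i; rewrite big_mkcond /=; apply: eq_bigr => j _.
  case: ifP => // hj.
  have : W i j = 0.
    move: hj; rewrite /nbhd inE => /negbT; rewrite negb_or => /andP[h _].
    have := W01 i j => /andP[h0 _]; apply/eqP; rewrite eq_le h0 andbT.
    by rewrite leNgt.
  by move->; rewrite scale0r.
under eq_bigr => i _ do rewrite E.
rewrite exchange_big /=; apply: eq_bigr => j _.
by rewrite -scaler_suml (eq_bigr (fun i => W j i)) ?W1 ?scale1r // => i _; rewrite Wsym.
Qed.

Lemma shift1 (R : ringType) T (f : nat -> R) :
  \sum_(1 <= t < T.+1) f t = \sum_(0 <= t < T) f t.+1.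
Proof. by rewrite big_add1. Qed.

Theorem lemma3 (R : realType) (d N : nat) (Xi : Type)
  (F : 'rV[R]_d -> Xi -> R) (J : Xi -> 'rV[R]_d -> R) (Q : seq Xi)
  (W : 'M[R]_N) (gamma alpha : R) (x0 : 'rV[R]_d) (xi : 'I_N -> nat -> Xi)
  (T : nat) :
  (0 < N)%N ->
  (forall s (x : 'rV[R]_d), differentiable (fun y => F y s) x) ->
  (forall i j, 0 <= W i j <= 1) ->
  (forall i j, W i j = W j i) ->
  (forall i, \sum_(j < N) W i j = 1) ->
  0 < gamma -> 0 <= alpha < 1 ->
  (1 <= T)%N ->
  \sum_(1 <= t < T.+1)
     sqnorm (Sbar F J Q W gamma alpha x0 xi t - xbar F J Q W gamma alpha x0 xi t)
  <= gamma ^+ 2 * alpha ^+ 2 / (1 - alpha) ^+ 4 *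
     \sum_(1 <= t < T.+1)
       sqnorm ((N%:R)^-1 *: \sum_(i < N) ross_gbar F J Q W gamma alpha x0 xi t i).
Proof.
move=> N0 _ W01 Wsym W1 g0 ha _.
have [a0 a1] := andP ha.
have hb : 1 - alpha != 0 by rewrite subr_eq0; apply/eqP => h; lra.
set G := fun t => (N%:R)^-1 *: \sum_(i < N) ross_gbar F J Q W gamma alpha x0 xi t i.
set u := fun t => (N%:R)^-1 *: \sum_(i < N) (ross F J Q W gamma alpha x0 xi t).2 i.
set xb := xbar F J Q W gamma alpha x0 xi.
have hu : forall t, u t.+1 = alpha *: u t + G t.+1.
  move=> t; rewrite /u /G /= sumW //.
  rewrite big_split /= -scaler_sumr scalerDr !scalerA mulrC.
  done.
have hx : forall t, xb t.+1 = xb t - gamma *: u t.+1.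
  move=> t; rewrite /xb /xbar /ross_x /= sumW // big_split /=.
  rewrite sumrN -scaler_sumr /u /= sumW // scalerBr !scalerA mulrC.
  done.
have hS : forall t, Sbar F J Q W gamma alpha x0 xi t.+1 - xb t.+1
   = (- (gamma * alpha / (1 - alpha))) *: u t.+1.
  move=> t; rewrite /Sbar -/xb.
  have -> : xb t = xb t.+1 + gamma *: u t.+1 by rewrite hx subrK.
  apply/rowP => k; rewrite !mxE; field.
  by rewrite hb andbT pnatr_eq0 -lt0n.
have u0 : u 0%N = 0 by rewrite /u /= big1 ?scaler0.
rewrite shift1.
under eq_bigr => t _ do rewrite hS sqnormZ.
rewrite -mulr_sumr shift1.
set A := \sum_(0 <= t < T) sqnorm (u t.+1).
set B := \sum_(0 <= t < T) sqnorm (G t.+1).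
have key : forall n, (1 - alpha) * \sum_(0 <= t < n) sqnorm (u t.+1)
    + alpha * sqnorm (u n) <= (\sum_(0 <= t < n) sqnorm (G t.+1)) / (1 - alpha).
  elim=> [|n IH]; first by rewrite !big_geq // u0 sqnorm0; lra.
  rewrite !big_nat_recr //=.
  have := @sqnorm_step R d alpha (u n) (G n.+1) ha; rewrite -hu => h.
  set S := \sum_(0 <= t < n) _ in IH *.
  set Bn := \sum_(0 <= t < n) _ in IH *.
  set s' := sqnorm (u n.+1) in h *.
  set sn := sqnorm (u n) in h IH.
  set g := sqnorm (G n.+1) in h *.
  rewrite mulrDl.
  have := @sqnorm_ge0 R d (u n.+1); nra.
have hA : A <= B / (1 - alpha) ^+ 2.
  have := key T; rewrite -/A -/B => h.
  have := @sqnorm_ge0 R d (u T).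
  have hb' : 0 < 1 - alpha by lra.
  rewrite expr2 invfM mulrA ler_pdivlMr // => ?.
  rewrite mulrC. nra.
have -> : (- (gamma * alpha / (1 - alpha))) ^+ 2 = gamma ^+ 2 * alpha ^+ 2 / (1 - alpha) ^+ 2.
  by rewrite sqrrN expr_div_n exprMn.
have -> : gamma ^+ 2 * alpha ^+ 2 / (1 - alpha) ^+ 4 * B
  = gamma ^+ 2 * alpha ^+ 2 / (1 - alpha) ^+ 2 * (B / (1 - alpha) ^+ 2).
  by field.
apply: ler_wpM2l hA.
by apply: divr_ge0; [apply: mulr_ge0|]; exact: sqr_ge0.
Qed.
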